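(* Let $0<\lambda_l<\lambda_u$ and let $n=T_{k+1}-T_k\ge 1$ be an integer. For $\eta=(\eta_{T_k+1},\dots,\eta_{T_{k+1}})\in\mathbb{R}^n$ define $$F(\eta)=\max_{\lambda\in[\lambda_l,\lambda_u]}\ \prod_{t=T_k+1}^{T_{k+1}}\Bigl[1-\Bigl(\bigl(\tfrac{1}{\lambda_l}-\tfrac{1}{\lambda_u}\bigr)\eta_t+\tfrac{1}{\lambda_u}\Bigr)\lambda\Bigr]^2 .$$ Set $\varphi=2\lambda_u/\lambda_l$, $\eta_{\max}=1$, $\eta_{\min}=0$. Then the UBA learning rates $$\eta^*_t=\frac{2\bigl(1+\cos\theta_t\bigr)}{2\varphi+(2-\varphi)\bigl(1+\cos\theta_t\bigr)},\qquad \theta_t=\frac{(2(t-T_k)-1)\pi}{2(T_{k+1}-T_k)},\quad t=T_k+1,\dots,T_{k+1},$$ (equivalently $\eta^*_t=\frac{1+\cos\theta_t}{2\kappa-(\kappa-1)(1+\cos\theta_t)}$ with $\kappa=\lambda_u/\lambda_l$) satisfy $\eta^*\in[0,1]^n$ and $F(\eta^* )=\min_{\eta\in\mathbb{R}^n}F(\eta)$, i.e. $\eta^*$ is an exact minimizer of this min-max problem.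
   Context: This is the ''UBA schedule'' $\eta_t=(\eta_{\max}-\eta_{\min})\frac{2(1+\cos\theta_t)}{2\varphi+(2-\varphi)(1+\cos\theta_t)}+\eta_{\min}$ on the phase $t\in\{T_k+1,\dots,T_{k+1}\}$, specialized to $\eta_{\max}=1,\eta_{\min}=0$. The quantity inside the objective is a polynomial in $\lambda$ of degree at most $n$ taking the value $1$ at $\lambda=0$. *)

(* Defs.v *)
From HB Require Import structures.
From mathcomp Require Import all_boot all_order all_algebra.
From mathcomp Require Import all_classical all_reals all_analysis.
Set Implicit Arguments. Unset Strict Implicit. Unset Printing Implicit Defensive.
Import Order.TTheory GRing.Theory Num.Theory.
Local Open Scope classical_set_scope.
Local Open Scope ring_scope.

(* The phase t = T_k+1, ..., T_{k+1} is indexed by i : 'I_n with t = T_k + 1 + i,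
   n = T_{k+1} - T_k. *)

Definition uba_obj (R : realType) (ll lu : R) (n : nat) (eta : 'I_n -> R) (lam : R) : R :=
  \prod_(i < n) (1 - ((ll^-1 - lu^-1) * eta i + lu^-1) * lam) ^+ 2.

(* F(eta) = max over lambda in [ll, lu] (the max is attained; we use sup) *)
Definition uba_F (R : realType) (ll lu : R) (n : nat) (eta : 'I_n -> R) : R :=
  sup [set uba_obj ll lu eta lam | lam in `[ll, lu]%classic].

(* theta_t with t - T_k = i + 1 *)
Definition uba_theta (R : realType) (n : nat) (i : 'I_n) : R :=
  ((2 * (i.+1)%:R - 1) * pi) / (2 * n%:R).

Definition uba_eta (R : realType) (ll lu : R) (n : nat) : 'I_n -> R := fun (i : 'I_n) =>
  let phi := 2 * lu / ll in
  (2 * (1 + cos (uba_theta R i))) / (2 * phi + (2 - phi) * (1 + cos (uba_theta R i))).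

Arguments uba_eta {R} ll lu n i.

(* Main.v *)
Require Import Defs.
From HB Require Import structures.
From mathcomp Require Import all_boot all_order all_algebra.
From mathcomp Require Import all_classical all_reals all_analysis.
From mathcomp Require Import ring lra zify.
From mathcomp Require Import polyrcf.
Import Order.TTheory GRing.Theory Num.Theory.
Local Open Scope ring_scope.

Fixpoint chebp (R : realType) (n : nat) : {poly R} * {poly R} :=
  match n with
  | 0%N => (1, 'X)
  | n'.+1 => let ab := chebp R n' in (ab.2, 'X * ab.2 *+ 2 - ab.1)
  end.
Definition cheb (R : realType) n := (chebp R n).1.

Lemma chebSS (R : realType) n : cheb R n.+2 = 'X * cheb R n.+1 *+ 2 - cheb R n.
Proof. by []. Qed.

Lemma cheb_cos (R : realType) n (x : R) : (cheb R n).[cos x] = cos (n%:R * x).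
Proof.
suff : (cheb R n).[cos x] = cos (n%:R * x) /\ (cheb R n.+1).[cos x] = cos (n.+1%:R * x) by case.
elim: n => [|n [IH1 IH2]].
  by rewrite /cheb /= hornerC hornerX mul0r cos0 mul1r.
split => //.
rewrite chebSS hornerD hornerN hornerMn hornerM hornerX IH1 IH2.
have -> : n.+2%:R * x = n.+1%:R * x + x by rewrite -addn1 natrD mulrDl mul1r.
have -> : n%:R * x = n.+1%:R * x - x by rewrite -addn1 natrD mulrDl mul1r addrK.
rewrite cosB cosD; ring.
Qed.

Lemma size_cheb (R : realType) n : (size (cheb R n) <= n.+1)%N.
Proof.
suff : (size (cheb R n) <= n.+1)%N /\ (size (cheb R n.+1) <= n.+2)%N by case.
elim: n => [|n [IH1 IH2]].
  by rewrite /cheb /= size_poly1 size_polyX.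
split => //.
rewrite chebSS (leq_trans (size_add _ _)) // geq_max size_polyN (leq_trans IH1) //=.
rewrite mulr2n (leq_trans (size_add _ _)) // geq_max andbb.
rewrite (leq_trans (size_mul_leq _ _)) // size_polyX add2n.
  by rewrite /= ltnS (leq_trans IH2).
by rewrite ltnS (leq_trans (leqnSn n)) // leqnSn.
Qed.

Lemma thetaE (R : realType) n (i : 'I_n) :
  uba_theta R i = (i.*2.+1)%:R * pi / (2 * n%:R).
Proof.
rewrite /uba_theta; congr (_ * _ / _).
by rewrite -mul2n !mulrS natrM; ring.
Qed.

Lemma theta_itv (R : realType) n (i : 'I_n) : 0 <= uba_theta R i <= pi.
Proof.
have n0 : (0 < n)%N by apply: (leq_ltn_trans (leq0n i)); exact: ltn_ord.
have nR : 0 < n%:R :> R by rewrite ltr0n.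
rewrite thetaE; apply/andP; split.
  by rewrite divr_ge0 ?mulr_ge0 ?pi_ge0 // mulr_ge0.
rewrite ler_pdivrMr ?mulr_gt0 // mulrC ler_pM2l ?pi_gt0 //.
rewrite -natrM ler_nat; case: i => /= j; rewrite -muln2; lia.
Qed.

Lemma cos_odd_pihalf (R : realType) (i : nat) : cos ((i.*2.+1)%:R * pi / 2) = 0 :> R.
Proof.
elim: i => [|i IH]; first by rewrite mul1r cos_pihalf.
have -> : (i.+1.*2.+1)%:R * pi / 2 = (i.*2.+1)%:R * pi / 2 + pi :> R.
  by rewrite doubleS !mulrS -!mul2n !natrM; field.
by rewrite cosDpi IH oppr0.
Qed.

Lemma cheb_root (R : realType) n (i : 'I_n) : (cheb R n).[cos (uba_theta R i)] = 0.
Proof.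
have n0 : (0 < n)%N by apply: (leq_ltn_trans (leq0n i)); exact: ltn_ord.
have nR : n%:R != 0 :> R by rewrite pnatr_eq0 -lt0n.
rewrite cheb_cos thetaE -(cos_odd_pihalf R i); congr cos; field; exact: nR.
Qed.

Lemma theta_inj (R : realType) n (i j : 'I_n) :
  cos (uba_theta R i) = cos (uba_theta R j) -> i = j.
Proof.
have n0 : (0 < n)%N by apply: (leq_ltn_trans (leq0n i)); exact: ltn_ord.
have nR : 0 < n%:R :> R by rewrite ltr0n.
move=> /cos_inj; rewrite !in_itv /= !theta_itv => /(_ isT isT).
rewrite !thetaE => /(congr1 (fun x => x * (2 * n%:R) / pi)).
have h2n : 2 * n%:R != 0 :> R by rewrite mulf_neq0 // gt_eqF.
rewrite !(mulfVK h2n) => /eqP.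
have pi0 : pi != 0 :> R by rewrite gt_eqF ?pi_gt0.
rewrite !(mulfK pi0) eqr_nat => /eqP [] /eqP.
rewrite -!muln2 eqn_mul2r /= => /eqP h; exact: val_inj.
Qed.

Lemma cheb_fact (R : realType) n : (1 <= n)%N ->
  exists k : R, k != 0 /\ forall x, (cheb R n).[x] = k * \prod_(i < n) (x - cos (uba_theta R i)).
Proof.
move=> n1.
set cs := [seq cos (uba_theta R i) | i <- enum 'I_n].
have ucs : uniq cs.
  rewrite map_inj_uniq ?enum_uniq //; exact: theta_inj.
have rts : all (root (cheb R n)) cs.
  by apply/allP => z /mapP [i _ ->]; apply/rootP; exact: cheb_root.
have [q Hq] := uniq_roots_prod_XsubC rts (etrans (uniq_rootsE _) ucs).
have c0 : cheb R n != 0.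
  by apply/eqP => h; move: (@cheb_cos R n 0); rewrite h horner0 mulr0 cos0 => /eqP; rewrite eq_sym oner_eq0.
have q0 : q != 0 by apply: contra_neq c0 => hq; rewrite Hq hq mul0r.
have pr0 : \prod_(z <- cs) ('X - z%:P) != 0.
  by rewrite -size_poly_eq0 size_prod_XsubC.
have szq : (size q <= 1)%N.
  have := size_cheb R n; rewrite Hq size_mul // size_prod_XsubC size_map.
  rewrite size_enum_ord addnS /=; case: (size q) => //= m; lia.
exists (q`_0); split.
  by apply: contra_neq q0 => h; rewrite (size1_polyC szq) h.
move=> x; rewrite Hq hornerM horner_prod (size1_polyC szq) hornerC.
by rewrite big_map big_enum /= coefC /=; congr (_ * _); apply: eq_bigr => i _; rewrite hornerXsubC.
Qed.

Set Implicit Arguments. Unset Strict Implicit.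

Lemma den_pos (R : realType) (ll lu c : R) : 0 < ll -> ll < lu -> -1 <= c <= 1 ->
  0 < 2 * (2 * lu / ll) + (2 - 2 * lu / ll) * (1 + c).
Proof.
move=> hll hlu /andP[c1 c2].
have hp : 2 < 2 * lu / ll by rewrite ltr_pdivlMr // ltr_pM2l //.
move: hp; set p := 2 * lu / ll => hp.
nra.
Qed.

Lemma eta_itv (R : realType) (ll lu c : R) : 0 < ll -> ll < lu -> -1 <= c <= 1 ->
  0 <= (2 * (1 + c)) / (2 * (2 * lu / ll) + (2 - 2 * lu / ll) * (1 + c)) <= 1.
Proof.
move=> hll hlu hc; have hD := den_pos hll hlu hc.
move: hc => /andP[c1 c2].
have hp : 2 < 2 * lu / ll by rewrite ltr_pdivlMr // ltr_pM2l //.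
move: hD hp; set p := 2 * lu / ll => hD hp.
rewrite divr_ge0 ?ler_pdivrMr //=; nra.
Qed.

Lemma coef_star (R : realType) (ll lu c : R) : 0 < ll -> ll < lu -> -1 <= c <= 1 ->
  (ll^-1 - lu^-1) * ((2 * (1 + c)) / (2 * (2 * lu / ll) + (2 - 2 * lu / ll) * (1 + c)))
   + lu^-1 = ((lu + ll) / 2 - (lu - ll) / 2 * c)^-1.
Proof.
move=> hll hlu hc; have hD := den_pos hll hlu hc.
move: hc => /andP[c1 c2].
have hr : 0 < (lu + ll) / 2 - (lu - ll) / 2 * c by nra.
have hlu0 : 0 < lu by lra.
field.
rewrite !gt_eqF //; nra.
Qed.

Lemma cos_c_itv (R : realType) (x : R) : -1 <= cos x <= 1.
Proof. by rewrite cos_geN1 cos_le1. Qed.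

Lemma pstar_cheb (R : realType) (ll lu : R) n : 0 < ll -> ll < lu -> (1 <= n)%N ->
  exists K : R, forall lam,
   \prod_(i < n) (1 - ((ll^-1 - lu^-1) * uba_eta ll lu n i + lu^-1) * lam)
   = K * (cheb R n).[((lu + ll) / 2 - lam) / ((lu - ll) / 2)].
Proof.
move=> hll hlu hn.
have [k [k0 Hk]] := @cheb_fact R n hn.
have hh : 0 < (lu - ll) / 2 by lra.
exists ((\prod_(i < n) (((lu - ll) / 2) / ((lu + ll) / 2 - (lu - ll) / 2 * cos (uba_theta R i)))) / k).
move=> lam; rewrite Hk mulrA divfK // -big_split /=.
apply: eq_bigr => i _.
rewrite /uba_eta /= coef_star //; last exact: cos_c_itv.
have := cos_c_itv (uba_theta R i); move=> /andP[c1 c2].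
have hr : 0 < (lu + ll) / 2 - (lu - ll) / 2 * cos (uba_theta R i) by nra.
field; rewrite !gt_eqF //; nra.
Qed.

Lemma cos_natpi (R : realType) (j : nat) : cos (j%:R * pi) = (-1) ^+ j :> R.
Proof.
elim: j => [|j IH]; first by rewrite mul0r cos0 expr0.
by rewrite -addn1 natrD mulrDl mul1r cosDpi IH exprD expr1 mulrN1.
Qed.

Definition Pa (R : realType) n (a : 'I_n -> R) : {poly R} :=
  \prod_(i < n) (1 - (a i)%:P * 'X).

Lemma Pa_horner (R : realType) n (a : 'I_n -> R) x :
  (Pa a).[x] = \prod_(i < n) (1 - a i * x).
Proof.
rewrite /Pa horner_prod; apply: eq_bigr => i _.
by rewrite hornerD hornerN hornerM hornerC hornerX hornerC.
Qed.

Lemma size_lin (R : realType) (c : R) : (size (1 - c%:P * 'X)%R <= 2)%N.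
Proof.
rewrite (leq_trans (size_add _ _)) // geq_max size_poly1 size_polyN /=.
rewrite (leq_trans (size_mul_leq _ _)) // size_polyX.
have := size_polyC_leq1 c; lia.
Qed.

Lemma size_Pa (R : realType) n (a : 'I_n -> R) : (size (Pa a) <= n.+1)%N.
Proof.
elim: n a => [|n IH] a; first by rewrite /Pa big_ord0 size_poly1.
rewrite /Pa big_ord_recr /=.
rewrite (leq_trans (size_mul_leq _ _)) //.
have := IH (fun i => a (widen_ord (leqnSn n) i)); rewrite /Pa => h1.
have h2 := size_lin (a ord_max).
have h3 := leq_add h1 h2; rewrite -subn1 leq_subLR (leq_trans h3) //; lia.
Qed.

Definition acoef (R : realType) (ll lu : R) n (e : 'I_n -> R) (i : 'I_n) : R :=
  (ll^-1 - lu^-1) * e i + lu^-1.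

Lemma objE (R : realType) (ll lu : R) n (e : 'I_n -> R) lam :
  uba_obj ll lu e lam = ((Pa (acoef ll lu e)).[lam]) ^+ 2.
Proof. by rewrite Pa_horner /uba_obj prodrXl. Qed.

Local Open Scope classical_set_scope.
Lemma Fsup_test (R : realType) (ll lu : R) n (e : 'I_n -> R) (f : R -> R) :
  ll <= lu -> 
  [set uba_obj ll lu e lam | lam in `[ll, lu]%classic] (uba_obj ll lu e ll).
Proof.
move=> h; exists ll => //=; rewrite in_itv /= lexx h //.
Qed.

Lemma Fsup_test2 (R : realType) (ll lu : R) n (e : 'I_n -> R) y :
  [set uba_obj ll lu e lam | lam in `[ll, lu]%classic] y -> exists lam, ll <= lam <= lu /\ y = uba_obj ll lu e lam.
Proof.
move=> [lam hl <-]; exists lam; split => //; move: hl; rewrite /= in_itv //.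
Qed.

Local Close Scope classical_set_scope.

Lemma sign_aux (R : realFieldType) (u A B : R) : A^+2 < u^+2 -> B^+2 < u^+2 -> (u - A) * (- u - B) < 0.
Proof.
move=> hA hB; have [hu|hu] := lerP 0 u.
  have h1 : A < u by rewrite ltNge; apply/negP => h; nra.
  have h2 : - u < B by rewrite ltNge; apply/negP => h; nra.
  nra.
have h1 : u < A by rewrite ltNge; apply/negP => h; nra.
have h2 : B < - u by rewrite ltNge; apply/negP => h; nra.
nra.
Qed.

Lemma main_ineq (R : realType) (ll lu : R) (n : nat)
  (hll : 0 < ll) (hlu : ll < lu) (hn : (1 <= n)%N) (K : R)
  (PsE : forall lam, (Pa (acoef ll lu (uba_eta ll lu n))).[lam]
        = K * (cheb R n).[((lu + ll) / 2 - lam) / ((lu - ll) / 2)])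
  (e : 'I_n -> R) :
  exists2 lam, ll <= lam <= lu & K^+2 <= ((Pa (acoef ll lu e)).[lam])^+2.
Proof.
case: (pselect (exists2 lam, ll <= lam <= lu & K^+2 <= ((Pa (acoef ll lu e)).[lam])^+2)) => // hno.
exfalso.
have Hlt : forall lam, ll <= lam <= lu -> ((Pa (acoef ll lu e)).[lam])^+2 < K^+2.
  by move=> lam hl; rewrite ltNge; apply/negP => hc; apply: hno; exists lam.
have hh : 0 < (lu - ll) / 2 by lra.
have nR : 0 < n%:R :> R by rewrite ltr0n.
pose s (j : nat) := (lu + ll) / 2 - (lu - ll) / 2 * cos (j%:R * pi / n%:R).
have ang : forall j, (j <= n)%N -> 0 <= (j%:R * pi / n%:R : R) <= pi.
  move=> j hj; apply/andP; split; first by rewrite divr_ge0 ?mulr_ge0 ?pi_ge0 ?ler0n.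
  by rewrite ler_pdivrMr // mulrC ler_pM2l ?pi_gt0 // ler_nat.
have hs_itv : forall j, ll <= s j <= lu.
  move=> j; have := cos_c_itv (j%:R * pi / n%:R : R); case/andP => c1 c2.
  rewrite /s; apply/andP; split; nra.
have hs_val : forall j, (Pa (acoef ll lu (uba_eta ll lu n))).[s j] = K * (-1) ^+ j.
  move=> j; rewrite PsE.
  have -> : ((lu + ll) / 2 - s j) / ((lu - ll) / 2) = cos (j%:R * pi / n%:R).
    rewrite /s; field; rewrite gt_eqF //; lra.
  rewrite cheb_cos -cos_natpi; congr (_ * cos _); field; exact: lt0r_neq0.
have hs_mono : forall j k, (j < k)%N -> (k <= n)%N -> s j < s k.
  move=> j k hjk hk; rewrite /s ltrD2l ltrN2 ltr_pM2l //.
  rewrite ltr_cos ?in_itv /= ?ang //; last by apply: ltnW (leq_trans hjk hk).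
  by rewrite ltr_pM2r ?invr_gt0 // ltr_pM2r ?pi_gt0 // ltr_nat.
have hs_le : forall j k, (j <= k)%N -> (k <= n)%N -> s j <= s k.
  move=> j k; rewrite leq_eqVlt => /orP[/eqP -> //|hjk hk]; exact/ltW/hs_mono.
have hs0 : s 0%N = ll by rewrite /s mul0r mul0r cos0; field.
pose q := Pa (acoef ll lu (uba_eta ll lu n)) - Pa (acoef ll lu e).
have hq_sign : forall j, (j < n)%N -> q.[s j] * q.[s j.+1] < 0.
  move=> j hj; rewrite /q !hornerD !hornerN !hs_val.
  have hA := Hlt _ (hs_itv j); have hB := Hlt _ (hs_itv j.+1).
  move: hA hB; set A := (Pa _).[s j]; set B := (Pa _).[s j.+1].
  have -> : K * (-1) ^+ j.+1 = - (K * (-1) ^+ j) by rewrite exprS mulN1r mulrN.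
  have <- : (K * (-1) ^+ j) ^+ 2 = K ^+ 2 by rewrite exprMn sqrr_sign mulr1.
  set u := K * (-1) ^+ j => hA hB.
  exact: sign_aux.
have rootsP : forall j : 'I_n, {x | x \in `]s j, s j.+1[ & root q x}.
  move=> j; apply: poly_ivtoo; last exact: hq_sign.
  exact/ltW/hs_mono.
pose rho (j : 'I_n) := s2val (rootsP j).
have rho_lt : forall j : 'I_n, s j < rho j < s j.+1.
  by move=> j; have := s2valP (rootsP j); rewrite in_itv.
have rho_root : forall j : 'I_n, root q (rho j) by move=> j; exact: (s2valP' (rootsP j)).
have rho_inj : injective rho.
  have aux : forall i j : 'I_n, (i < j)%N -> rho i < rho j.
    move=> i j hij; have /andP[_ h1] := rho_lt i; have /andP[h2 _] := rho_lt j.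
    apply: (lt_trans h1); apply: (le_lt_trans _ h2); apply: hs_le => //.
    exact: ltnW (ltn_ord j).
  move=> i j hij; case: (ltngtP i j) => [hlt|hlt|/val_inj //].
    by have := aux _ _ hlt; rewrite hij ltxx.
  by have := aux _ _ hlt; rewrite hij ltxx.
have rho_pos : forall j : 'I_n, 0 < rho j.
  move=> j; have /andP[h1 _] := rho_lt j; apply: (lt_le_trans hll).
  rewrite -hs0; apply: (le_trans _ (ltW h1)); apply: hs_le => //.
  exact: ltnW (ltn_ord j).
have q0 : q = 0.
  apply: (@roots_geq_poly_eq0 _ q (0 :: [seq rho j | j <- enum 'I_n])).
  - rewrite /= (_ : root q 0 = true); last first.
      apply/rootP; rewrite /q hornerD hornerN !Pa_horner.
      by rewrite !big1 ?subrr // => i _; rewrite mulr0 subr0.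
    by apply/allP => x /mapP [j _ ->]; exact: rho_root.
  - rewrite /= map_inj_uniq ?enum_uniq // andbT.
    by apply/mapP => [[j _ hj]]; have := rho_pos j; rewrite -hj ltxx.
  - rewrite /= size_map size_enum_ord.
    rewrite (leq_trans (size_add _ _)) // geq_max size_polyN !size_Pa.
    done.
have := Hlt _ (hs_itv 0%N).
have : q.[s 0%N] = 0 by rewrite q0 horner0.
rewrite /q hornerD hornerN hs_val expr0 mulr1 => /eqP; rewrite subr_eq0 => /eqP <-.
by rewrite ltxx.
Qed.

Theorem proposition1 (R : realType) (ll lu : R) (n : nat)
  (hll : 0 < ll) (hlu : ll < lu) (hn : (1 <= n)%N) :
  (forall i : 'I_n, 0 <= uba_eta ll lu n i <= 1) /\
  (forall eta : 'I_n -> R, uba_F ll lu (uba_eta ll lu n) <= uba_F ll lu eta).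
Proof.
split.
  by move=> i; rewrite /uba_eta /=; apply: eta_itv => //; exact: cos_c_itv.
move=> eta.
have [K HK] := pstar_cheb hll hlu hn.
have PsE : forall lam, (Pa (acoef ll lu (uba_eta ll lu n))).[lam]
        = K * (cheb R n).[((lu + ll) / 2 - lam) / ((lu - ll) / 2)].
  by move=> lam; rewrite Pa_horner -HK.
have hh : 0 < (lu - ll) / 2 by lra.
have xitv : forall lam, ll <= lam <= lu -> -1 <= ((lu + ll) / 2 - lam) / ((lu - ll) / 2) <= 1.
  move=> lam /andP[l1 l2]; apply/andP; split.
    by rewrite ler_pdivlMr //; lra.
  by rewrite ler_pdivrMr //; lra.
have Tb : forall x, -1 <= x <= 1 -> ((cheb R n).[x])^+2 <= 1.
  move=> x hx; have hx' : x \in `[(-1), 1] by rewrite in_itv.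
  rewrite -[x](acosK hx') cheb_cos.
  have := cos_c_itv (n%:R * acos x); case/andP => c1 c2; nra.
have Hstar : forall lam, ll <= lam <= lu -> uba_obj ll lu (uba_eta ll lu n) lam <= K^+2.
  move=> lam hl; rewrite objE PsE exprMn.
  have := Tb _ (xitv _ hl); have := sqr_ge0 K; nra.
have F1 : uba_F ll lu (uba_eta ll lu n) <= K^+2.
  rewrite /uba_F; apply: ge_sup.
    exists (uba_obj ll lu (uba_eta ll lu n) ll); apply: Fsup_test => //; exact: ltW.
  move=> y /Fsup_test2 [lam [hl ->]]; exact: Hstar.
apply: (le_trans F1).
have [lam0 hl0 hK] := main_ineq hll hlu hn PsE eta.
rewrite -objE in hK; apply: (le_trans hK); rewrite /uba_F; apply: ub_le_sup; last first.
  by exists lam0 => //=; rewrite in_itv.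
exists (\prod_(i < n) (1 + `|acoef ll lu eta i| * lu) ^+ 2).
move=> y /Fsup_test2 [lam [/andP[l1 l2] ->]].
rewrite /uba_obj; apply: ler_prod => i _; rewrite sqr_ge0 /=.
have := ler_norm (acoef ll lu eta i); have := lerNnormlW (lexx `|acoef ll lu eta i|).
rewrite /acoef; set a := (ll^-1 - lu^-1) * eta i + lu^-1.
have := normr_ge0 a; set b := `|a| => hb h1 h2.
have e1 : 0 <= b * lu + a * lam by nra.
have e2 : 0 <= 2 + b * lu - a * lam by nra.
nra.
Qed.
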